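(* Let $q$ be a power of the odd prime $p$ and let $f$ be a Dembowski–Ostrom polynomial over $\mathbb F_{q^2}$ such that $x\mapsto f(x)$ is a planar function on $\mathbb F_{q^2}$. Let $\kappa:\mathbb F_{q^2}\to\mathbb F_{q^2}$, $x\mapsto\bar x$, be an additive map with $\kappa(\kappa(x))=x$, $\overline{f(x)}=f(\bar x)$ and $\#\{y:y+\bar y=f(x+\bar x)\}=q$ for all $x\in\mathbb F_{q^2}$, and let $\mathcal U:=\{(x,y):y+\bar y=f(x+\bar x)\}\cup\{(\infty)\}$ be the corresponding unital of $\Pi(f)$. Let $\theta\in\mathbb F_{q^2}^*$ be such that for every $c\in\mathbb F_q$, $\#\{x\in\mathbb F_{q^2}:\theta_1f_0(x)-\theta_0f_1(x)=c\}$ equals $q+1$ if $c\neq0$ and $1$ if $c=0$, and let $\mathcal U_\theta:=\{(x,t\theta):x\in\mathbb F_{q^2},t\in\mathbb F_q\}\cup\{(\infty)\}$. Then $\mathcal U$ and $\mathcal U_\theta$ are not equivalent, i.e.\ no collineation of $\Pi(f)$ maps $\mathcal U_\theta$ onto $\mathcal U$.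
   Context: A Dembowski–Ostrom polynomial over $\mathbb F_{q^2}$ is one of the form $f(x)=\sum_{i,j}a_{ij}x^{p^i+p^j}$ with $a_{ij}\in\mathbb F_{q^2}$. A function $f$ on $\mathbb F_{q^2}$ is planar if $x\mapsto f(x+a)-f(x)$ is a bijection for every $a\neq0$. For planar $f$, $\Pi(f)$ is the projective plane with points $(x,y)\in\mathbb F_{q^2}^2$ and $(a)$ for $a\in\mathbb F_{q^2}\cup\{\infty\}$, lines $L_{a,b}=\{(x,f(x+a)-b):x\in\mathbb F_{q^2}\}\cup\{(a)\}$, $N_a=\{(a,y):y\in\mathbb F_{q^2}\}\cup\{(\infty)\}$ ($a,b\in\mathbb F_{q^2}$), $L_\infty=\{(a):a\in\mathbb F_{q^2}\cup\{\infty\}\}$; a collineation is a bijection of points mapping lines onto lines. A fixed $\xi\in\mathbb F_{q^2}\setminus\mathbb F_q$ is chosen; $\theta=\theta_0+\theta_1\xi$ and $f(x)=f_0(x)+f_1(x)\xi$ with components in $\mathbb F_q$. *)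

(* Defs.v *)
From HB Require Import structures.
From mathcomp Require Import all_boot all_order all_algebra all_field.
Set Implicit Arguments. Unset Strict Implicit. Unset Printing Implicit Defensive.
Import GRing.Theory.
Local Open Scope ring_scope.

(* Points of Pi(f): inl (x,y) is the affine point (x,y);
   inr (Some a) is the point (a) at infinity, inr None is (infinity). *)
Definition point (F : finFieldType) : finType := ((F * F) + option F)%type.

(* Dembowski-Ostrom: f(x) = sum_{i,j} a_ij x^(p^i+p^j); since x^(p^(2n)) = x on
   F_{p^(2n)}, indices can be taken below 2n = the degree of F over F_p. *)
Definition is_DO (F : finFieldType) (p m : nat) (f : F -> F) : Prop :=
  exists a : nat -> nat -> F,
    forall x, f x = \sum_(i < m) \sum_(j < m) a i j * x ^+ (p ^ i + p ^ j).

Definition planar (F : finFieldType) (f : F -> F) : Prop :=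
  forall a : F, a != 0 -> bijective (fun x => f (x + a) - f x).

Section Plane.
Variables (F : finFieldType) (f : F -> F).

Definition line_L (a b : F) : {set point F} :=
  [set P : point F | match P with
                     | inl (x, y) => y == f (x + a) - b
                     | inr (Some c) => c == a
                     | inr None => false end].

Definition line_N (a : F) : {set point F} :=
  [set P : point F | match P with
                     | inl (x, _) => x == a
                     | inr (Some _) => false
                     | inr None => true end].

Definition line_inf : {set point F} :=
  [set P : point F | match P with inl _ => false | inr _ => true end].

Definition is_line (S : {set point F}) : Prop :=
  (exists a b, S = line_L a b) \/ (exists a, S = line_N a) \/ S = line_inf.

Definition collineation (phi : point F -> point F) : Prop :=
  bijective phi /\ forall S, is_line S -> is_line (phi @: S).

End Plane.

Definition unital_U (F : finFieldType) (f kappa : F -> F) : {set point F} :=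
  [set P : point F | match P with
                     | inl (x, y) => y + kappa y == f (x + kappa x)
                     | inr (Some _) => false
                     | inr None => true end].

Definition unital_Utheta (F : finFieldType) (q : nat) (theta : F) : {set point F} :=
  [set P : point F | match P with
                     | inl (x, y) => [exists t : F, (t ^+ q == t) && (y == t * theta)]
                     | inr (Some _) => false
                     | inr None => true end].

(* Main.v *)
Require Import Defs.
From HB Require Import structures.
From mathcomp Require Import all_boot all_order all_algebra all_field.
From mathcomp Require Import ring.
Import GRing.Theory.
Set Implicit Arguments. Unset Strict Implicit. Unset Printing Implicit Defensive.
Local Open Scope ring_scope.

Lemma eq0_trans (F : finFieldType) (x y : F) : x = 0 -> y = x -> y = 0.
Proof. by move=> -> . Qed.

Lemma sum0_trans (F : finFieldType) (x y z : F) : x = 0 -> y = 0 -> z = x + y -> z = 0.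
Proof. by move=> -> -> ->; rewrite addr0. Qed.

Lemma from0 (F : finFieldType) (x y d : F) : d = 0 -> x - y = d -> x = y.
Proof. by move=> -> /eqP; rewrite subr_eq0 => /eqP. Qed.

Lemma from0' (F : finFieldType) (x y d : F) : d = 0 -> y - x = d -> x = y.
Proof. by move=> -> /eqP; rewrite subr_eq0 => /eqP. Qed.

Definition quadr {F : finFieldType} (h : F -> F) := forall u u' v,
  h (u+u'+v) - h (u+u') - h (u+v) - h (u'+v) + h u + h u' + h v - h 0 = 0.

Lemma quadr_sum (F : finFieldType) (I : Type) (s : seq I) (G : I -> F -> F) :
  (forall i, quadr (G i)) -> quadr (fun x => \sum_(i <- s) G i x).
Proof.
move=> hG; elim: s => [|i s IH] u u' v.
  by rewrite !big_nil; ring.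
move: (hG i u u' v) (IH u u' v) => /= H1 H2.
rewrite !big_cons /=. apply: (sum0_trans H1 H2). ring.
Qed.

Lemma quadr_ext (F : finFieldType) (g h : F -> F) : (forall x, g x = h x) ->
  quadr h -> quadr g.
Proof. by move=> e hh u u' v; rewrite !e. Qed.

Lemma frobD (F : finFieldType) p k : p \in [pchar F] -> forall x y : F,
  (x + y) ^+ (p ^ k) = x ^+ (p ^ k) + y ^+ (p ^ k).
Proof.
move=> hp x y; apply: exprDn_pchar.
by rewrite (eq_pnat _ (pcharf_eq hp)) pnatX pnat_id ?(pcharf_prime hp).
Qed.

Lemma DO_quadr (F : finFieldType) p m (f : F -> F) : p \in [pchar F] ->
  is_DO p m f -> quadr f.
Proof.
move=> hp [a ha]; apply: (quadr_ext ha).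
apply: quadr_sum => i; apply: quadr_sum => j u u' v.
have p0 : forall k, (0 : F) ^+ (p ^ k) = 0.
  by move=> k; rewrite expr0n expn_eq0 (gtn_eqF (prime_gt0 (pcharf_prime hp))).
rewrite !exprD !frobD // !p0; ring.
Qed.

Lemma DO_f0 (F : finFieldType) p m (f : F -> F) : prime p -> is_DO p m f -> f 0 = 0.
Proof.
move=> pp [a ha]; rewrite ha big1 // => i _; rewrite big1 // => j _.
by rewrite expr0n addn_eq0 !expn_eq0 (gtn_eqF (prime_gt0 pp)) mulr0.
Qed.

Lemma DO_fN (F : finFieldType) p m (f : F -> F) : odd p -> is_DO p m f ->
  forall x, f (- x) = f x.
Proof.
move=> op [a ha] x; rewrite !ha; apply: eq_bigr => i _; apply: eq_bigr => j _.
by rewrite exprNn -signr_odd oddD !oddX op !orbT /= expr0 mul1r.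
Qed.
Section Geo.
Variables (F : finFieldType) (f kappa : F -> F).
Hypothesis hq : quadr f.
Hypothesis hf0 : f 0 = 0.
Hypothesis hfN : forall x, f (- x) = f x.
Hypothesis hpl : planar f.
Hypothesis h2 : (2 : F) != 0.
Hypothesis kD : forall x y, kappa (x + y) = kappa x + kappa y.
Hypothesis kk : forall x, kappa (kappa x) = x.
Hypothesis kf : forall x, kappa (f x) = f (kappa x).

Definition B u v := f (u + v) - f u - f v.

Lemma fexp u v : f (u + v) = f u + f v + B u v.
Proof. rewrite /B; ring. Qed.

Lemma BC u v : B u v = B v u.
Proof. rewrite /B (addrC u v); ring. Qed.

Lemma BDl u u' v : B (u + u') v = B u v + B u' v.
Proof.
have := hq u u' v; rewrite hf0 => H.
apply: (from0 H); rewrite /B; ring.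
Qed.

Lemma BDr u v v' : B u (v + v') = B u v + B u v'.
Proof. by rewrite BC BDl !(BC _ u). Qed.

Lemma B0r u : B u 0 = 0.
Proof. by rewrite /B addr0 hf0; ring. Qed.

Lemma BNr u v : B u (- v) = - B u v.
Proof.
apply/eqP; rewrite -subr_eq0 opprK addrC -BDr subrr B0r //.
Qed.

Lemma BNl u v : B (- u) v = - B u v.
Proof. by rewrite BC BNr BC. Qed.

Lemma Bxx x : B x x = 2 * f x.
Proof.
have := fexp x (- x); rewrite subrr hf0 hfN BNr => H.
apply: (from0' (esym H)); ring.
Qed.

Lemma k0 : kappa 0 = 0.
Proof.
have H := kD 0 0; rewrite addr0 in H.
by apply: (@addrI _ (kappa 0)); rewrite -H addr0.
Qed.

Lemma kN x : kappa (- x) = - kappa x.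
Proof.
apply/eqP; rewrite -subr_eq0 opprK addrC -kD subrr k0 //.
Qed.

Lemma kB u v : kappa (B u v) = B (kappa u) (kappa v).
Proof. by rewrite /B !kD !kN !kf kD. Qed.

Lemma phi_id w A b : kappa A = A ->
  (f (w + A) - b) + kappa (f (w + A) - b) - f ((w + kappa w) + A)
  = f A - b - kappa b - B w (kappa w).
Proof.
move=> kA; rewrite kD kN kf kD kA.
rewrite !fexp BDl; ring.
Qed.

Lemma B_even w : B (- w) (kappa (- w)) = B w (kappa w).
Proof. by rewrite kN BNl BNr opprK. Qed.

(* membership in U of a point on L_{a,b} with abscissa x is invariant
   under x -> 2 kappa a - x *)
Lemma U_even a b x :
  (f (x + a) - b) + kappa (f (x + a) - b) = f (x + kappa x) ->
  let x' := kappa a + kappa a - x in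
  (f (x' + a) - b) + kappa (f (x' + a) - b) = f (x' + kappa x').
Proof.
move=> H x'.
have kA : kappa (a + kappa a) = a + kappa a by rewrite kD kk addrC.
have E := phi_id (x - kappa a) b kA.
have E' := phi_id (- (x - kappa a)) b kA.
rewrite B_even in E'.
have e1 : x - kappa a + (a + kappa a) = x + a by ring.
have e2 : x - kappa a + kappa (x - kappa a) + (a + kappa a) = x + kappa x
  by rewrite kD kN kk; ring.
have e3 : - (x - kappa a) + (a + kappa a) = x' + a by rewrite /x'; ring.
have e4 : - (x - kappa a) + kappa (- (x - kappa a)) + (a + kappa a) = x' + kappa x'
  by rewrite /x' !(kN, kD, kk); ring.
rewrite e1 e2 in E; rewrite e3 e4 -E H subrr in E'.
by apply/eqP; rewrite -subr_eq0 E'.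
Qed.

Lemma plan_inj e x y : e != 0 -> f (x + e) - f x = f (y + e) - f y -> x = y.
Proof. by move=> /hpl/bij_inj; apply. Qed.

Lemma plan_surj e z : e != 0 -> exists x, f (x + e) - f x = z.
Proof. by move=> /hpl [g _ gK]; exists (g z); rewrite gK. Qed.

Lemma f_pm u v : f u = f v -> u = v \/ u = - v.
Proof.
move=> H.
set m := (u + v) / 2; set e := (u - v) / 2.
have hu : u = m + e by rewrite /m /e -mulrDl; field.
have hv : v = m - e by rewrite /m /e -mulrBl; field.
have Bme : B m e = 0.
  move: H; rewrite hu hv !fexp hfN BNr => H.
  move/eqP: H; rewrite -subr_eq0 => /eqP H.
  have : 2 * B m e = 0 by apply: (from0 H); ring.
  by move/eqP; rewrite mulf_eq0 (negbTE h2) /= => /eqP.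
have [e0|en0] := eqVneq e 0.
  by left; rewrite hu hv e0 addr0 subr0.
right; have m0 : m = 0.
  apply: (plan_inj en0); rewrite add0r hf0 subr0 fexp Bme addr0; ring.
by rewrite hu hv m0 add0r sub0r opprK.
Qed.

Lemma LL_common (a b a' b' : F) (P1 P2 : point F) :
  P1 \in line_L f a b -> P2 \in line_L f a b ->
  P1 \in line_L f a' b' -> P2 \in line_L f a' b' ->
  P1 = P2 \/ line_L f a b = line_L f a' b'.
Proof.
have [<-|ana] := eqVneq a a'.
  have [<-|bnb] := eqVneq b b'; first by move=> *; right.
  suff : P1 \in line_L f a b -> P2 \in line_L f a b ->
    P1 \in line_L f a b' -> P2 \in line_L f a b' -> P1 = P2.
    by move=> H *; left; apply: H.
  move: P1 P2 => [[x1 y1]|[c1|]] [[x2 y2]|[c2|]]; rewrite !inE //=.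
  - by move=> /eqP -> _ /eqP /addrI /oppr_inj bb; rewrite bb eqxx in bnb.
  - by move=> /eqP -> _ /eqP /addrI /oppr_inj bb; rewrite bb eqxx in bnb.
  - by move=> _ /eqP -> _ /eqP /addrI /oppr_inj bb; rewrite bb eqxx in bnb.
  - by move=> /eqP -> /eqP ->.
suff : P1 \in line_L f a b -> P2 \in line_L f a b ->
    P1 \in line_L f a' b' -> P2 \in line_L f a' b' -> P1 = P2.
  by move=> H *; left; apply: H.
move: P1 P2 => [[x1 y1]|[c1|]] [[x2 y2]|[c2|]]; rewrite !inE //=;
  try by (move=> *; repeat match goal with H : is_true (_ == _) |- _ => move/eqP: H => H end;
          subst; rewrite eqxx in ana).
move=> /eqP e1 /eqP e2 /eqP e3 /eqP e4.
have ne : a - a' != 0 by rewrite subr_eq0.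
have hx : x1 + a' = x2 + a'.
  apply: (plan_inj ne).
  have -> : x1 + a' + (a - a') = x1 + a by ring.
  have -> : x2 + a' + (a - a') = x2 + a by ring.
  apply: (@addIr _ (b' - b)).
  have E1 : f (x1 + a) - f (x1 + a') = b - b'.
    by rewrite -[f (x1 + a)](subrK b) -[f (x1 + a')](subrK b') -e1 -e3; ring.
  have E2 : f (x2 + a) - f (x2 + a') = b - b'.
    by rewrite -[f (x2 + a)](subrK b) -[f (x2 + a')](subrK b') -e2 -e4; ring.
  by rewrite E1 E2.
have hx' : x1 = x2 by apply: (addIr a').
by subst.
Qed.

Lemma LN_common (a b c : F) (P1 P2 : point F) :
  P1 \in line_L f a b -> P2 \in line_L f a b ->
  P1 \in line_N c -> P2 \in line_N c -> P1 = P2.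
Proof.
move: P1 P2 => [[x1 y1]|[c1|]] [[x2 y2]|[c2|]]; rewrite !inE //=.
by move=> /eqP -> /eqP -> /eqP -> /eqP ->.
Qed.

Lemma Linf_common (a b : F) (P1 P2 : point F) :
  P1 \in line_L f a b -> P2 \in line_L f a b ->
  P1 \in line_inf F -> P2 \in line_inf F -> P1 = P2.
Proof.
by move: P1 P2 => [[x1 y1]|[c1|]] [[x2 y2]|[c2|]]; rewrite !inE //= => /eqP -> /eqP ->.
Qed.

Lemma NN_common (c c' : F) (P1 P2 : point F) :
  P1 \in line_N c -> P2 \in line_N c ->
  P1 \in line_N c' -> P2 \in line_N c' -> P1 = P2 \/ line_N c = line_N c'.
Proof.
have [<-|cnc] := eqVneq c c'; first by move=> *; right.
suff : P1 \in line_N c -> P2 \in line_N c ->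
    P1 \in line_N c' -> P2 \in line_N c' -> P1 = P2.
  by move=> H *; left; apply: H.
move: P1 P2 => [[x1 y1]|[c1|]] [[x2 y2]|[c2|]]; rewrite !inE //=;
  move=> *; repeat match goal with H : is_true (_ == _) |- _ => move/eqP: H => H end;
  subst; by rewrite eqxx in cnc.
Qed.

Lemma Ninf_common (c : F) (P1 P2 : point F) :
  P1 \in line_N c -> P2 \in line_N c ->
  P1 \in line_inf F -> P2 \in line_inf F -> P1 = P2.
Proof.
by move: P1 P2 => [[x1 y1]|[c1|]] [[x2 y2]|[c2|]]; rewrite !inE.
Qed.

Lemma line_uniq (S S' : {set point F}) (P1 P2 : point F) : is_line f S -> is_line f S' ->
  P1 \in S -> P2 \in S -> P1 \in S' -> P2 \in S' -> P1 != P2 -> S = S'.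
Proof.
move=> hS hS' g1 g2 g1' g2' /eqP ne.
case: hS => [[a [b eS]]|[[c eS]|eS]]; case: hS' => [[a' [b' eS']]|[[c' eS']|eS']];
  subst S S'.
- by case: (LL_common g1 g2 g1' g2').
- by case: ne; apply: (LN_common g1 g2 g1' g2').
- by case: ne; apply: (Linf_common g1 g2 g1' g2').
- by case: ne; apply: (LN_common g1' g2' g1 g2).
- by case: (NN_common g1 g2 g1' g2').
- by case: ne; apply: (Ninf_common g1 g2 g1' g2').
- by case: ne; apply: (Linf_common g1' g2' g1 g2).
- by case: ne; apply: (Ninf_common g1' g2' g1 g2).
- by [].
Qed.

Lemma f_shift z c : f (- z + (c + c)) = 2 * f (z - c) - f z + 2 * f c.
Proof.
rewrite !fexp !hfN !BDr !BNl !Bxx !BNr; ring.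
Qed.

Hypothesis hex : forall x, exists y, y + kappa y = f (x + kappa x).

Lemma tangentL (a b : F) (P : point F) : line_L f a b :&: unital_U f kappa = [set P] ->
  P = inl (kappa a, kappa b).
Proof.
move=> H.
have hP : P \in line_L f a b :&: unital_U f kappa by rewrite H set11.
move: hP; case: P H => [[x y]|[c|]] H; rewrite !inE ?andbF //= => /andP [/eqP ey /eqP hU].
have hU' := hU; rewrite ey in hU'.
have hU2 := U_even hU'.
set x' := kappa a + kappa a - x in hU2.
have hP' : inl (x', f (x' + a) - b) \in line_L f a b :&: unital_U f kappa.
  by rewrite !inE /= eqxx /= hU2.
move: hP'; rewrite H inE => /eqP [ex' _].
have hx : x = kappa a.
  have : 2 * (x - kappa a) = 0 by apply: (from0 (subrr x')); rewrite {1}ex' /x'; ring.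
  by move/eqP; rewrite mulf_eq0 (negbTE h2) subr_eq0 => /eqP.
clear ex' hU2 x' hU'; subst x.
have hy : kappa y = b.
  move: hU; rewrite kk ey => E; apply: (addrI (f (kappa a + a) - b)).
  by rewrite E; ring.
by rewrite -hy kk.
Qed.

Lemma U_feet (Q : point F) : Q \notin unital_U f kappa -> exists M, is_line f M /\
  forall S P, is_line f S -> Q \in S -> S :&: unital_U f kappa = [set P] -> P \in M.
Proof.
case: Q => [[x0 y0]|[a0|]]; rewrite inE //= => hQ.
- exists (line_L f (kappa x0) (kappa y0)); split; first by left; do 2 eexists.
  move=> S P [[a [b ->]]|[[c ->]|->]]; rewrite ?inE //=.
  + move=> /eqP ey0 /tangentL ->; rewrite /= ey0; apply/eqP.
    rewrite !(kD, kN, kf, kk) (addrC (kappa x0)); ring.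
  + move=> /eqP <- H; case: (hex x0) => y hy.
    have h1 : inl (x0, y) \in line_N x0 :&: unital_U f kappa by rewrite !inE /= hy !eqxx.
    have h2' : (inr None : point F) \in line_N x0 :&: unital_U f kappa by rewrite !inE.
    by move: h1 h2'; rewrite H !inE => /eqP <- /eqP.
- exists (line_N (kappa a0)); split; first by right; left; eexists.
  move=> S P [[a [b ->]]|[[c ->]|->]]; rewrite ?inE //=.
  + by move=> /eqP <- /tangentL ->.
  + move=> _ H; have : P \in line_inf F :&: unital_U f kappa by rewrite H set11.
    by case: P {H} => [[x y]|[c|]]; rewrite !inE.
Qed.

End Geo.

Unset Implicit Arguments.

Theorem theorem4p2 (p n q : nat) (F : finFieldType) (f kappa : F -> F)
  (xi theta theta0 theta1 : F) (f0 f1 : F -> F) :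
  prime p -> odd p -> (0 < n)%N -> q = (p ^ n)%N -> #|F| = (q ^ 2)%N ->
  is_DO p (2 * n) f -> planar f ->
  (forall x y, kappa (x + y) = kappa x + kappa y) ->
  (forall x, kappa (kappa x) = x) ->
  (forall x, kappa (f x) = f (kappa x)) ->
  (forall x, #|[set y : F | y + kappa y == f (x + kappa x)]| = q) ->
  xi ^+ q != xi ->
  theta0 ^+ q = theta0 -> theta1 ^+ q = theta1 -> theta = theta0 + theta1 * xi ->
  (forall x, f0 x ^+ q = f0 x) -> (forall x, f1 x ^+ q = f1 x) ->
  (forall x, f x = f0 x + f1 x * xi) ->
  theta != 0 ->
  (forall c : F, c ^+ q = c ->
     #|[set x : F | theta1 * f0 x - theta0 * f1 x == c]| =
       (if c != 0 then q.+1 else 1%N)) ->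
  ~ (exists phi : point F -> point F,
       collineation f phi /\ phi @: unital_Utheta q theta = unital_U f kappa).
Proof.
move=> pp op n0 eq hF hDO hpl kD kk kf hcard hxi th0 th1 hth hf0q hf1q hfd thn0 hcnt.
case=> phi [[bij hline] himg].
have phi_inj := bij_inj bij.
have pc : p \in [pchar F].
  by apply: (card_finPcharP (n := (n * 2)%N)) => //; rewrite hF eq expnM.
have h2 : (2 : F) != 0.
  rewrite -(dvdn_pcharf pc 2); apply/negP => /(dvdn_leq (isT : (0 < 2)%N)) h.
  have := prime_gt1 pp => h'.
  have p2 : p = 2%N by apply/eqP; rewrite eqn_leq h h'.
  by rewrite p2 in op.
have hq := DO_quadr pc hDO.
have hf0 := DO_f0 pp hDO.
have hfN := DO_fN op hDO.
have p3 : (3 <= p)%N.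
  have := prime_gt1 pp; case: p op {pp pc h2 hDO eq hfN hq hf0 hpl} => [|[|[|p']]] //.
have q3 : (3 <= q)%N.
  rewrite eq; apply: (leq_trans p3); rewrite -{1}(expn1 p) leq_exp2l //.
  exact: (leq_trans (isT : (1 < 3)%N) p3).
have hex : forall x, exists y, y + kappa y = f (x + kappa x).
  move=> x; have : (0 < #|[set y : F | (y + kappa y == f (x + kappa x))%R]|)%N.
    by rewrite hcard (leq_trans _ q3).
  by rewrite card_gt0 => /set0Pn [y]; rewrite inE => /eqP; exists y.
have fqD : forall x y : F, (x + y) ^+ q = x ^+ q + y ^+ q.
  by move=> x y; rewrite eq frobD.
have oq : odd q by rewrite eq oddX op orbT.
have fqN : forall x : F, (- x) ^+ q = - x ^+ q.
  by move=> x; rewrite exprNn -signr_odd oq expr1 mulN1r.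
have fqB : forall x y : F, (x - y) ^+ q = x ^+ q - y ^+ q.
  by move=> x y; rewrite fqD fqN.
have indep : forall a b c d : F, a ^+ q = a -> b ^+ q = b -> c ^+ q = c ->
    d ^+ q = d -> a + b * xi = c + d * xi -> a = c /\ b = d.
  move=> a b c d ha hb hc hd e.
  have [bd|bnd] := eqVneq b d.
    by split => //; move: e; rewrite bd => /addIr.
  have bdn : b - d != 0 by rewrite subr_eq0.
  have exi : xi = (c - a) / (b - d).
    apply: (mulIf bdn); rewrite divfK //.
    by apply: (from0 (subrr (a + b * xi))); rewrite {2}e; ring.
  by move: hxi; rewrite exi exprMn exprVn !fqB ha hb hc hd eqxx.
pose g z := theta1 * f0 z - theta0 * f1 z.
have gf : forall w s, s ^+ q = s -> f w = s * theta -> g w = 0.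
  move=> w s hs e.
  have [e0 e1] : f0 w = s * theta0 /\ f1 w = s * theta1.
    apply: indep => //; rewrite ?exprMn ?hs ?th0 ?th1 //.
    by rewrite -hfd e hth; ring.
  by rewrite /g e0 e1; ring.
have f00 : f0 0 = 0 /\ f1 0 = 0.
  apply: indep; rewrite ?expr0n ?hf0q ?hf1q ?(gtn_eqF (leq_trans _ q3)) //.
  by rewrite -hfd hf0; ring.
have g0 : forall z, g z = 0 -> z = 0.
  have := hcnt 0; rewrite expr0n (gtn_eqF (leq_trans _ q3)) //= eqxx => /(_ erefl).
  move/eqP/cards1P => [z0 hz0] z gz.
  have : 0 \in [set x | theta1 * f0 x - theta0 * f1 x == 0].
    by rewrite inE (proj1 f00) (proj2 f00) !mulr0 subrr.
  have : z \in [set x | theta1 * f0 x - theta0 * f1 x == 0] by rewrite inE -/(g z) gz.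
  by rewrite hz0 !inE => /eqP -> /eqP.
have decomp : forall a b : F, a ^+ q = a -> b ^+ q = b -> theta1 * a - theta0 * b = 0 ->
    exists t, t ^+ q = t /\ a + b * xi = t * theta.
  move=> a b ha hb e.
  have [t1z|t1n] := eqVneq theta1 0.
    have t0n : theta0 != 0 by move: thn0; rewrite hth t1z mul0r addr0.
    have b0 : b = 0.
      by apply/eqP; move: e; rewrite t1z mul0r sub0r => /eqP; rewrite oppr_eq0 mulf_eq0 (negbTE t0n).
    exists (a / theta0); split; first by rewrite exprMn exprVn ha th0.
    by rewrite hth t1z b0; field.
  exists (b / theta1); split; first by rewrite exprMn exprVn hb th1.
  have ea : a = theta0 * b / theta1.
    by apply: (mulIf t1n); rewrite divfK // mulrC; apply: (from0 e).
  by rewrite hth ea; field.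
have cZ : #|[set x | theta1 * f0 x - theta0 * f1 x == 1]| = q.+1.
  by rewrite hcnt ?expr1n // oner_neq0.
have : (2 < #|[set x | (theta1 * f0 x - theta0 * f1 x == 1)%R]|)%N.
  by rewrite cZ ltnS (leq_trans _ q3).
case/card_gt2P => z1 [z2 [z3 [[hz1 hz2 hz3] [n12 n23 n31]]]].
move: hz1 hz2 hz3; rewrite !inE -!/(g _) => /eqP gz1 /eqP gz2 /eqP gz3.
have tz : forall z, g z = 1 -> exists t, t ^+ q = t /\ f z1 - f z = t * theta.
  move=> z gz; have [t [ht e]] := decomp (f0 z1 - f0 z) (f1 z1 - f1 z)
    ltac:(by rewrite fqB !hf0q) ltac:(by rewrite fqB !hf1q)
    ltac:(by apply: (from0 (subrr (g z1))); rewrite {2}gz1 -gz /g; ring).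
  by exists t; split => //; rewrite !hfd -e; ring.
pose Ut := unital_Utheta q theta.
pose U := unital_U f kappa.
pose Q' : point F := inl (0, f z1).
have tang : forall z t, t ^+ q = t -> f z1 - f z = t * theta ->
    Q' \in line_L f z (- (t * theta)) /\
    line_L f z (- (t * theta)) :&: Ut = [set inl (- z, t * theta)].
  move=> z t ht e; split.
    by rewrite inE /= add0r -e opprK addrC subrK.
  apply/setP => R; rewrite !inE; case: R => [[x y]|[c|]] /=; last by [].
    apply/idP/idP.
      case/andP => /eqP ey /existsP [s /andP [/eqP hs /eqP es]].
      have hxz : x + z = 0.
        apply: g0; apply: (gf _ (s - t)); first by rewrite fqB hs ht.
        by apply: (from0 (subrr y)); rewrite {1}ey es; ring.
      have -> : x = - z by apply: (from0 hxz); ring.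
      by rewrite ey hxz hf0 sub0r opprK.
    case/eqP => -> ->; rewrite addNr hf0 sub0r opprK eqxx /=.
    by apply/existsP; exists t; rewrite ht !eqxx.
  by rewrite andbF.
have Q'n : Q' \notin Ut.
  rewrite inE /=; apply/negP => /existsP [s /andP [/eqP hs /eqP es]].
  by move: (gf _ _ hs es); rewrite gz1 => /eqP; rewrite oner_eq0.
have Qn : phi Q' \notin U.
  by rewrite /U -himg mem_imset.
have [M [lM hM]] := U_feet hq hf0 h2 kD kk kf hex Qn.
have footM : forall z t, t ^+ q = t -> f z1 - f z = t * theta ->
    phi (inl (- z, t * theta)) \in M.
  move=> z t ht e; have [hQ' hT] := tang z t ht e.
  apply: (hM (phi @: line_L f z (- (t * theta)))).
  - by apply: hline; left; do 2 eexists.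
  - exact: imset_f.
  - by rewrite -himg -imsetI ?hT ?imset_set1 // => x y _ _; apply: phi_inj.
have [t1 [ht1 e1]] := tz z1 gz1.
have [t2 [ht2 e2]] := tz z2 gz2.
have [t3 [ht3 e3]] := tz z3 gz3.
have M1 := footM z1 t1 ht1 e1.
have M2 := footM z2 t2 ht2 e2.
have M3 := footM z3 t3 ht3 e3.
have en : z2 - z1 != 0 by rewrite subr_eq0 eq_sym.
have [x hx] := plan_surj hpl (t1 * theta - t2 * theta) en.
pose a := x + z2.
pose b := f (x + (z2 - z1)) - t1 * theta.
have ea1 : - z1 + a = x + (z2 - z1) by rewrite /a; ring.
have ea2 : - z2 + a = x by rewrite /a; ring.
have P1L : (inl (- z1, t1 * theta) : point F) \in line_L f a b.
  by rewrite inE /= ea1 /b opprB addrC subrK.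
have P2L : (inl (- z2, t2 * theta) : point F) \in line_L f a b.
  rewrite inE /= ea2 /b; apply/eqP.
  by apply: (from0 (subrr (t1 * theta - t2 * theta))); rewrite -{1}hx; ring.
have lM' : phi @: line_L f a b = M.
  apply: (line_uniq hpl (P1 := phi (inl (- z1, t1 * theta)))
                        (P2 := phi (inl (- z2, t2 * theta)))).
  - by apply: hline; left; do 2 eexists.
  - exact: lM.
  - exact: imset_f.
  - exact: imset_f.
  - exact: M1.
  - exact: M2.
  - rewrite (inj_eq phi_inj); apply/negP => /eqP [] /oppr_inj e12.
    by rewrite e12 eqxx in n12.
move: M3; rewrite -lM' mem_imset // inE /= => /eqP e3'.
(* contradiction: three feet on one line L_{a,b} *)
pose c := a / 2.
have ac : a = c + c by rewrite /c; field.
have key : forall z t, f z1 - f z = t * theta -> t * theta = f (- z + a) - b ->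
    2 * f (z - c) = f z1 - 2 * f c + b.
  move=> z t e e'.
  move: e'; rewrite ac (f_shift hq hf0 hfN) -e => e'.
  by apply: (from0' (subrr (f z1 - f z))); rewrite {2}e'; ring.
have P1' : t1 * theta = f (- z1 + a) - b by move: P1L; rewrite inE => /eqP.
have P2' : t2 * theta = f (- z2 + a) - b by move: P2L; rewrite inE => /eqP.
have k1 := key _ _ e1 P1'.
have k2 := key _ _ e2 P2'.
have k3 := key _ _ e3 e3'.
have f12 : f (z1 - c) = f (z2 - c) by apply: (mulfI h2); rewrite k1 k2.
have f13 : f (z1 - c) = f (z3 - c) by apply: (mulfI h2); rewrite k1 k3.
case: (f_pm hq hf0 hfN hpl h2 f12) => [/addIr e12|e12].
  by rewrite e12 eqxx in n12.
case: (f_pm hq hf0 hfN hpl h2 f13) => [/addIr e13|e13].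
  by rewrite e13 eqxx in n31.
have : z2 - c = z3 - c by rewrite -[LHS]opprK -e12 e13 opprK.
by move/addIr => e23; rewrite e23 eqxx in n23.
Qed.
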